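(* Let $d\ge 1$. Let $\mathbf{s}\in\mathbb{R}^d$ be a latent source vector and $\mathbf{u}$ an auxiliary variable, and suppose the conditional density of $\mathbf{s}$ given $\mathbf{u}$ is the contaminated density $$p(\mathbf{s}|\mathbf{u})=(1-\epsilon(\mathbf{u}))\,p^{\star}(\mathbf{s}|\mathbf{u})+\epsilon(\mathbf{u})\,\delta(\mathbf{s}|\mathbf{u}),\qquad \epsilon(\mathbf{u})\in[0,1),$$ where $p^{\star}$ is the target density and $\delta$ the outlier density. Assume: (A1) the data are $\mathbf{x}=\mathbf{f}(\mathbf{s})$ with $\mathbf{f}:\mathbb{R}^d\to\mathbb{R}^d$ smooth and invertible; (A2) $p^{\star}(\mathbf{s}|\mathbf{u})$ is conditionally independent and belongs to the exponential family $$\log p^{\star}(\mathbf{s}|\mathbf{u})=\sum_{j=1}^{d}\lambda_j(\mathbf{u})q_j(s_j)+\lambda_0(\mathbf{u})-\log Z(\boldsymbol{\lambda}(\mathbf{u})),$$ with scalar functions $q_j$, parameters $\lambda_j(\mathbf{u})$ and partition function $Z$; (A3) for all $\mathbf{s},\mathbf{u}$ the ratio $\delta(\mathbf{s}|\mathbf{u})/p^{\star}(\mathbf{s}|\mathbf{u})$ is finite; (A4) (in the limit of infinite data) the conditional density $p(\mathbf{x}|\mathbf{u})$ of $\mathbf{x}$ given $\mathbf{u}$ satisfies $$\log\frac{p(\mathbf{x}|\mathbf{u})}{c(\mathbf{x})e(\mathbf{u})}=\mathbf{w}(\mathbf{u})^{\top}\mathbf{h}(\mathbf{x})$$ for some vector-valued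 functions $\mathbf{w}(\mathbf{u})=(w_1(\mathbf{u}),\dots,w_d(\mathbf{u}))^\top$, $\mathbf{h}(\mathbf{x})=(h_1(\mathbf{x}),\dots,h_d(\mathbf{x}))^\top$ and scalar functions $c,e$; (A5) there exist $m+1$ points $\mathbf{u}_0,\mathbf{u}_1,\dots,\mathbf{u}_m$ such that the $d\times d$ matrices $\bar{\boldsymbol{\Lambda}}:=\sum_{i=1}^m\bar{\boldsymbol{\lambda}}(\mathbf{u}_i)\bar{\boldsymbol{\lambda}}(\mathbf{u}_i)^{\top}$ and $\sum_{i=1}^m\bar{\mathbf{w}}(\mathbf{u}_i)\bar{\boldsymbol{\lambda}}(\mathbf{u}_i)^{\top}$ are invertible, where $\bar{\boldsymbol{\lambda}}(\mathbf{u}):=\boldsymbol{\lambda}(\mathbf{u})-\boldsymbol{\lambda}(\mathbf{u}_0)$ and $\bar{\mathbf{w}}(\mathbf{u}):=\mathbf{w}(\mathbf{u})-\mathbf{w}(\mathbf{u}_0)$. Then, for $\epsilon(\mathbf{u})$ sufficiently small for all $\mathbf{u}$ (in the limit of infinite data), there exist an invertible $d\times d$ matrix $\mathbf{A}$ and a vector $\boldsymbol{\alpha}\in\mathbb{R}^d$ such that $$\mathbf{q}(\mathbf{s})+\mathbf{r}(\mathbf{s})=\mathbf{A}\mathbf{h}(\mathbf{x})+\boldsymbol{\alpha},$$ where $\mathbf{q}(\mathbf{s})=(q_1(s_1),\dots,q_d(s_d))^\top$ and, with $\bar{\boldsymbol{\omega}}(\mathbf{u}):=\bar{\boldsymbol{\Lambda}}^{-1}\bar{\boldsymbol{\lambda}}(\mathbf{u})$,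 $\mathbf{1}_d=(1,\dots,1)^\top$ and $\epsilon_{\max}:=\max_{i=0,1,\dots,m}\epsilon(\mathbf{u}_i)$, $$\mathbf{r}(\mathbf{s})=\sum_{i=1}^m\left\{\epsilon(\mathbf{u}_i)\frac{\delta(\mathbf{s}|\mathbf{u}_i)}{p^{\star}(\mathbf{s}|\mathbf{u}_i)}-\epsilon(\mathbf{u}_0)\frac{\delta(\mathbf{s}|\mathbf{u}_0)}{p^{\star}(\mathbf{s}|\mathbf{u}_0)}\right\}\bar{\boldsymbol{\omega}}(\mathbf{u}_i)+O(\epsilon_{\max}^2)\mathbf{1}_d .$$
   Context: This is a nonlinear ICA setting: observations $\mathbf{x}$ arise as an invertible nonlinear mixture of sources $\mathbf{s}$, and an auxiliary variable $\mathbf{u}$ (e.g. a time-segment label or past observation) is observed alongside $\mathbf{x}$. The conditional density $p(\mathbf{x}|\mathbf{u})$ is the one induced from the contaminated source density $p(\mathbf{s}|\mathbf{u})$ via $\mathbf{x}=\mathbf{f}(\mathbf{s})$. $O(\epsilon_{\max}^2)$ denotes a term bounded by a constant times $\epsilon_{\max}^2$ as $\epsilon_{\max}\to 0$. *)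

(* Defs.v *)
From HB Require Import structures.
From mathcomp Require Import all_boot all_order all_algebra.
From mathcomp Require Import all_classical all_reals all_analysis.
Set Implicit Arguments. Unset Strict Implicit. Unset Printing Implicit Defensive.
Import Order.TTheory GRing.Theory Num.Theory.
Local Open Scope ring_scope.

(* Sources s and observations x live in 'rV[R]_d
   (row vectors, as required by the library's [jacobian]); the parameter
   vectors lambda(u), w(u), h(x), q(s) are column vectors 'cV[R]_d. *)

Definition qvec (R : realType) (d : nat) (q : 'I_d -> R -> R) (s : 'rV[R]_d)
  : 'cV[R]_d := \col_j q j (s ord0 j).

Definition vbar (R : realType) (U : Type) (d : nat) (v : U -> 'cV[R]_d)
  (u0 : U) (u : U) : 'cV[R]_d := v u - v u0.

Definition Lambar (R : realType) (U : Type) (d m : nat) (lam : U -> 'cV[R]_d)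
  (u0 : U) (us : 'I_m -> U) : 'M[R]_d :=
  \sum_(i < m) (vbar lam u0 (us i) *m (vbar lam u0 (us i))^T).

Definition WLambar (R : realType) (U : Type) (d m : nat)
  (w lam : U -> 'cV[R]_d) (u0 : U) (us : 'I_m -> U) : 'M[R]_d :=
  \sum_(i < m) (vbar w u0 (us i) *m (vbar lam u0 (us i))^T).

Definition omegabar (R : realType) (U : Type) (d m : nat) (lam : U -> 'cV[R]_d)
  (u0 : U) (us : 'I_m -> U) (u : U) : 'cV[R]_d :=
  invmx (Lambar lam u0 us) *m vbar lam u0 u.

(* eps_max := max_{i=0..m} eps(u_i)  (eps >= 0, so 0 is a neutral seed) *)
Definition epsmax (R : realType) (U : Type) (m : nat) (eps : U -> R)
  (u0 : U) (us : 'I_m -> U) : R :=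
  Num.max (eps u0) (\big[Num.max/0]_(i < m) eps (us i)).

Definition rlead (R : realType) (U : Type) (d m : nat) (lam : U -> 'cV[R]_d)
  (pstar delta : U -> 'rV[R]_d -> R) (eps : U -> R)
  (u0 : U) (us : 'I_m -> U) (s : 'rV[R]_d) : 'cV[R]_d :=
  \sum_(i < m)
    ((eps (us i) * (delta (us i) s / pstar (us i) s)
      - eps u0 * (delta u0 s / pstar u0 s)) *: omegabar lam u0 us (us i)).

Definition pcont (R : realType) (U : Type) (d : nat)
  (pstar delta : U -> 'rV[R]_d -> R) (eps : U -> R) (u : U) (s : 'rV[R]_d) : R :=
  (1 - eps u) * pstar u s + eps u * delta u s.

(* Main.v *)
Require Import Defs.
From HB Require Import structures.
From mathcomp Require Import all_boot all_order all_algebra.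
From mathcomp Require Import all_classical all_reals all_analysis.
From mathcomp Require Import ring lra.
Import Order.TTheory GRing.Theory Num.Theory.
Local Open Scope ring_scope.

Lemma ln_quad (R : realType) (t : R) : -1/2 <= t -> `|ln (1+t) - t| <= 2 * t^+2.
Proof.
move=> ht.
have h1 : 0 < 1 + t by lra.
have up : ln (1+t) <= t by apply: le_ln1Dx; lra.
set v := (1+t)^-1.
have hv : 0 < v by rewrite invr_gt0.
have hv1 : v * (1+t) = 1 by rewrite mulVf // gt_eqF.
have lo : 1 - v <= ln (1+t).
  have := @le_ln1Dx R (v - 1) ltac:(lra).
  rewrite addrC subrK lnV ?posrE //. lra.
have v2 : v <= 2 by nra.
have e : t - 1 + v = t^+2 * v by nra.
rewrite ler_norml; apply/andP; split; nra.
Qed.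

Definition dotc (R : realType) d (a b : 'cV[R]_d) : R := \sum_j a j ord0 * b j ord0.
Arguments dotc {R d}.

Lemma mx_outer (R : realType) d (a b v : 'cV[R]_d) :
  (a *m b^T) *m v = dotc b v *: a.
Proof.
apply/matrixP=> k l; rewrite (ord1 l) !mxE mulr_suml; apply: eq_bigr => j _.
by rewrite !mxE big_ord1 !mxE -mulrA; apply: mulrC.
Qed.

Lemma dotcB (R : realType) d (a b v : 'cV[R]_d) :
  dotc (a - b) v = dotc a v - dotc b v.
Proof.
rewrite /dotc -sumrB; apply: eq_bigr => j _; by rewrite !mxE mulrBl.
Qed.

Lemma eps_le_max (R : realType) (U : Type) m (eps : U -> R) u0 (us : 'I_m -> U) i :
  eps (us i) <= epsmax eps u0 us /\ eps u0 <= epsmax eps u0 us.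
Proof.
rewrite /epsmax; split; rewrite le_max ?lexx ?orbT //.
by rewrite (le_bigmax _ (fun i => eps (us i)) i) orbT.
Qed.

Lemma zmod_cancel (R : realType) d (X Y Z W : 'cV[R]_d) :
  X + Y + Z - X - W = Y + Z - W.
Proof. apply/matrixP => a b; rewrite !mxE; ring. Qed.

Definition rho (R : realType) (U : Type) d (pstar delta : U -> 'rV[R]_d -> R) u s :=
  delta u s / pstar u s.
Arguments rho {R U d}.

Theorem theorem1 (R : realType) (d : nat) (U : Type)
  (f : 'rV[R]_d -> 'rV[R]_d)
  (q : 'I_d -> R -> R) (lam : U -> 'cV[R]_d) (lam0 : U -> R)
  (Z : 'cV[R]_d -> R)
  (pstar delta : U -> 'rV[R]_d -> R)
  (m : nat) (u0 : U) (us : 'I_m -> U) :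
  (0 < d)%N ->
  bijective f ->
  (forall s, differentiable f s) ->
  (forall s, \det ('J f s) != 0) ->
  (forall u s, 0 < pstar u s) ->
  (forall u s, ln (pstar u s)
               = \sum_(j < d) lam u j ord0 * q j (s ord0 j) + lam0 u
                 - ln (Z (lam u))) ->
  (forall u s, 0 <= delta u s) ->
  Lambar lam u0 us \in unitmx ->
  exists eta : R, 0 < eta /\
  exists C : 'rV[R]_d -> R,
  forall (eps : U -> R) (px : U -> 'rV[R]_d -> R)
         (w : U -> 'cV[R]_d) (h : 'rV[R]_d -> 'cV[R]_d)
         (c : 'rV[R]_d -> R) (e : U -> R),
    (forall u, 0 <= eps u < 1) ->
    (forall u, eps u < eta) ->
    (forall u s, px u (f s) = pcont pstar delta eps u s / `|\det ('J f s)|) ->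
    (forall u x, 0 < px u x / (c x * e u)) ->
    (forall u x, ln (px u x / (c x * e u))
                 = \sum_(j < d) w u j ord0 * h x j ord0) ->
    WLambar w lam u0 us \in unitmx ->
    exists (A : 'M[R]_d) (alpha : 'cV[R]_d),
      A \in unitmx /\
      forall (s : 'rV[R]_d) (k : 'I_d),
        `|(A *m h (f s) + alpha - qvec q s - rlead lam pstar delta eps u0 us s) k ord0|
          <= C s * epsmax eps u0 us ^+ 2.
Proof.
move=> d0 fbij fdiff hJ hpos hln hdel hL.
exists (1/2); split; first lra.
pose om i := omegabar lam u0 us (us i).
pose rh := rho pstar delta.
exists (fun s => \sum_(i < m) (2 * ((rh (us i) s + 1)^+2 + (rh u0 s + 1)^+2)
                   * \sum_k' `|om i k' ord0|)).
move=> eps px w h c e heps heta hpx hA4pos hA4 hWL.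
pose g u s := ln (1 + eps u * (rh u s - 1)).
have rh0 : forall u s, 0 <= rh u s.
  by move=> u s; rewrite /rh /rho divr_ge0 // ltW.
have tpos : forall u s, 1/2 < 1 + eps u * (rh u s - 1).
  move=> u s; have := heps u; have := heta u; have := rh0 u s; move=> *; nra.
have F : forall u s, dotc (w u) (h (f s)) =
   dotc (lam u) (qvec q s) + lam0 u - ln (Z (lam u)) + g u s
   - ln `|\det ('J f s)| - ln (c (f s) * e u).
  move=> u s.
  have pst := hpos u s.
  have tp := tpos u s.
  have tp' : 0 < 1 + eps u * (rh u s - 1) by lra.
  have pc : pcont pstar delta eps u s = pstar u s * (1 + eps u * (rh u s - 1)).
    by rewrite /pcont /rh /rho; field; rewrite gt_eqF.
  have Jp : 0 < `|\det ('J f s)| by rewrite normr_gt0.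
  have pcp : 0 < pcont pstar delta eps u s by rewrite pc mulr_gt0.
  have pxp : 0 < px u (f s) by rewrite hpx divr_gt0.
  have cep : 0 < c (f s) * e u.
    by have := hA4pos u (f s); rewrite pmulr_rgt0 // invr_gt0.
  have dq : dotc (lam u) (qvec q s) = \sum_j lam u j ord0 * q j (s ord0 j).
    by apply: eq_bigr => j _; rewrite mxE.
  rewrite dq /dotc -hA4 ln_div ?posrE // hpx ln_div ?posrE // pc lnM ?posrE // hln.
  by rewrite /g.
have pcpos : forall u s, 0 < pcont pstar delta eps u s.
  move=> u s; have pst := hpos u s; have tp := tpos u s.
  have tp' : 0 < 1 + eps u * (rh u s - 1) by lra.
  have -> : pcont pstar delta eps u s = pstar u s * (1 + eps u * (rh u s - 1)).
    by rewrite /pcont /rh /rho; field; rewrite gt_eqF.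
  by rewrite mulr_gt0.
have cepos : forall u s, 0 < c (f s) * e u.
  move=> u s.
  have Jp : 0 < `|\det ('J f s)| by rewrite normr_gt0.
  have pxp : 0 < px u (f s) by rewrite hpx divr_gt0.
  by have := hA4pos u (f s); rewrite pmulr_rgt0 // invr_gt0.
pose kb i := (lam0 (us i) - ln (Z (lam (us i)))) - (lam0 u0 - ln (Z (lam u0)))
             - ln (e (us i) / e u0).
have key : forall i s, dotc (vbar w u0 (us i)) (h (f s))
    = dotc (vbar lam u0 (us i)) (qvec q s) + kb i + g (us i) s - g u0 s.
  move=> i s; rewrite /vbar !dotcB !F.
  have ce_i := cepos (us i) s; have ce_0 := cepos u0 s.
  have : c (f s) * e u0 != 0 by rewrite gt_eqF.
  rewrite mulf_eq0 negb_or => /andP[c0 e0].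
  have ee : e (us i) / e u0 = (c (f s) * e (us i)) / (c (f s) * e u0).
    by rewrite -mulf_div divff // mul1r.
  have eep : 0 < e (us i) / e u0 by rewrite ee divr_gt0.
  have -> : ln (c (f s) * e (us i)) = ln (c (f s) * e u0) + ln (e (us i) / e u0).
    rewrite -lnM ?posrE //; congr ln; by rewrite ee mulrCA mulfV ?mulr1 // mulf_neq0.
  rewrite /kb; lra.
pose L := Lambar lam u0 us. pose K := WLambar w lam u0 us.
pose lb i := vbar lam u0 (us i). pose wb i := vbar w u0 (us i).
pose G i s := g (us i) s - g u0 s.
exists (invmx L *m K^T).
exists (\sum_i (eps (us i) - eps u0 - kb i) *: om i).
split; first by rewrite unitmx_mul unitmx_inv hL unitmx_tr hWL.
move=> s k.
have KT : K^T = \sum_i lb i *m (wb i)^T.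
  rewrite /K /WLambar raddf_sum; apply: eq_bigr => i _.
  by rewrite /= trmx_mul trmxK.
have Kh : K^T *m h (f s) = L *m qvec q s + \sum_i (kb i + G i s) *: lb i.
  rewrite KT /L /Lambar !mulmx_suml -big_split; apply: eq_bigr => i _.
  rewrite !mx_outer key /= -scalerDl; congr (_ *: _); rewrite /G; ring.
have Ah : invmx L *m K^T *m h (f s) = qvec q s + \sum_i (kb i + G i s) *: om i.
  rewrite -mulmxA Kh mulmxDr mulKmx // mulmx_sumr; congr (_ + _).
  by apply: eq_bigr => i _; rewrite scalemxAr.
have D : invmx L *m K^T *m h (f s) + \sum_i (eps (us i) - eps u0 - kb i) *: om i
     - qvec q s - rlead lam pstar delta eps u0 us s
   = \sum_i ((g (us i) s - eps (us i) * (rh (us i) s - 1))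
             - (g u0 s - eps u0 * (rh u0 s - 1))) *: om i.
  rewrite Ah zmod_cancel /rlead -big_split -sumrB; apply: eq_bigr => i _.
  rewrite /= -scalerDl -scalerBl; congr (_ *: _); rewrite /G /rh /rho; ring.
rewrite D summxE.
set M := epsmax eps u0 us.
have Eb : forall u, 0 <= eps u <= M ->
    `|g u s - eps u * (rh u s - 1)| <= 2 * M^+2 * (rh u s + 1)^+2.
  move=> u /andP[hu0 hu].
  have tp := tpos u s.
  have := @ln_quad R (eps u * (rh u s - 1)) ltac:(lra).
  rewrite -/(g u s) => hb; apply: le_trans hb _.
  have r0 := rh0 u s.
  have e2 : eps u ^+ 2 <= M ^+ 2 by nra.
  have r2 : (rh u s - 1) ^+ 2 <= (rh u s + 1) ^+ 2 by nra.
  rewrite exprMn -mulrA ler_wpM2l //.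
  by apply: ler_pM; rewrite ?sqr_ge0.
apply: le_trans (ler_norm_sum _ _ _) _.
rewrite mulr_suml; apply: ler_sum => i _.
rewrite mxE normrM.
have [hi h0] := @eps_le_max R U m eps u0 us i.
have Ei := Eb (us i) ltac:(have := heps (us i); move=> /andP[? ?]; apply/andP; split => //).
have E0 := Eb u0 ltac:(have := heps u0; move=> /andP[? ?]; apply/andP; split => //).
have hom : `|om i k ord0| <= \sum_k' `|om i k' ord0|.
  rewrite (bigD1 k) //= lerDl; apply: sumr_ge0 => j _; exact: normr_ge0.
have hE : `|g (us i) s - eps (us i) * (rh (us i) s - 1) -
            (g u0 s - eps u0 * (rh u0 s - 1))|
          <= 2 * M^+2 * ((rh (us i) s + 1)^+2 + (rh u0 s + 1)^+2).
  apply: le_trans (ler_normB _ _) _; rewrite [in X in _ <= X]mulrDr; exact: lerD.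
apply: le_trans (ler_pM (normr_ge0 _) (normr_ge0 _) hE hom) _.
by rewrite le_eqVlt; apply/orP; left; apply/eqP; ring.
Qed.
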